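(* Fix an integer $n\ge1$. Let $Q$ be the variety obtained by gluing $Q_0=\mathbb A^1\times\mathbb A^2$ and $Q_1=\mathbb A^1\times\mathbb A^2$ (coordinates $(t,(u,v))$ on each) along the open sets $\{t\ne0\}$ via $Q_0\supset\{t\neq 0\}\to\{t\ne0\}\subset Q_1$, $(t,(u,v))\mapsto(t^{-1},(t^{n+1}v^n+t^{n+2}u,\,tv))$. Define regular functions on $Q$ (given on $Q_0$; on $Q_1$) by: $f_0=tv$; $v$. $f_1=v$; $tv$. $g_i=t^{n+2-i}u+t^{n+1-i}v^n$; $t^iu$ ($i=0,\dots,n+1$). $h=u$; $t^{n+2}u-t^{n+1}v^n$. Let $\hat P\subset\mathbb A^{n+5}$ be the reduced affine variety defined by the ideal $I\subset\mathbb{C}[X_0,X_1,Y_0,\dots,Y_{n+1},Z]$ generated by $Y_iY_j-Y_kY_l$ ($i+j=k+l$), $X_0Y_{i+1}-X_1Y_i$ ($i=0,\dots,n$), $ZY_i+X_1^nY_{i+1}-Y_{i+1}Y_{n+1}$ ($i=0,\dots,n$), and $ZX_0+X_1^{n+1}-X_1Y_{n+1}$, and let $\psi=(f_0,f_1,g_0,\dots,g_{n+1},h)\colon Q\to\hat P$. Then $\psi$ contracts the curve $C=\{u=v=0\}\simeq\mathbb P^1$ to $0$ and restricts to an isomorphism $Q\setminus C\to\hat P\setminus\{0\}$; moreover $\mathcal O(Q)=\mathbb C[f_0,f_1,g_0,\dots,g_{n+1},h]$ and $\psi^*\colon\mathcal O(\hat P)\to\mathcal O(Q)$ is an isomorp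hism.
   Context: All varieties are over $\mathbb{C}$. (In the paper, $\hat P$ is the affine extension $\hat P_n$ of $\mathrm{SL}_2$.) *)

(* Defs.v *)
(* Classical (point-set) algebraic geometry over an
   algebraically closed field K of characteristic 0 (stand-in for C). *)
From HB Require Import structures.
From mathcomp Require Import all_boot all_order all_algebra.
Set Implicit Arguments. Unset Strict Implicit. Unset Printing Implicit Defensive.
Import GRing.Theory.
Local Open Scope ring_scope.

Definition pt (K : Type) (k : nat) := 'I_k -> K.

(* Polynomial functions on A^k (over an infinite field these are exactly
   the polynomials in k variables). *)
Inductive polyfun (K : fieldType) (k : nat) : (pt K k -> K) -> Prop :=
| polyfun_const (c : K) : polyfun (fun _ => c)
| polyfun_var (i : 'I_k) : polyfun (fun x => x i)
| polyfun_add f g : polyfun f -> polyfun g -> polyfun (fun x => f x + g x)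
| polyfun_mul f g : polyfun f -> polyfun g -> polyfun (fun x => f x * g x)
| polyfun_ext f g : polyfun f -> (forall x, f x = g x) -> polyfun g.

Definition origin (K : fieldType) (k : nat) : pt K k := fun _ => 0.

Definition tc (K : fieldType) (p : pt K 3) : K := p (inord 0).
Definition uc (K : fieldType) (p : pt K 3) : K := p (inord 1).
Definition vc (K : fieldType) (p : pt K 3) : K := p (inord 2).
Definition mk3 (K : fieldType) (t u v : K) : pt K 3 :=
  fun i => if val i == 0%N then t else if val i == 1%N then u else v.

Definition trans (K : fieldType) (n : nat) (p : pt K 3) : pt K 3 :=
  let t := tc p in let u := uc p in let v := vc p in
  mk3 t^-1 (t ^+ n.+1 * v ^+ n + t ^+ n.+2 * u) (t * v).

(* A point of Q is represented by a chart index (false = Q_0, true = Q_1)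
   and a point of that chart, up to the gluing relation Qequiv. *)
Definition Qpt (K : fieldType) := (bool * pt K 3)%type.

Definition Qequiv (K : fieldType) (n : nat) (a b : Qpt K) : Prop :=
  a = b
  \/ (a.1 = false /\ b.1 = true /\ tc a.2 != 0 /\ b.2 = trans n a.2)
  \/ (b.1 = false /\ a.1 = true /\ tc b.2 != 0 /\ a.2 = trans n b.2).

Definition Qcompat (K : fieldType) (T : Type) (n : nat) (F : bool -> pt K 3 -> T) :=
  forall p : pt K 3, tc p != 0 -> F false p = F true (trans n p).

Definition regularQ (K : fieldType) (n : nat) (F : bool -> pt K 3 -> K) : Prop :=
  Qcompat n F /\ polyfun (F false) /\ polyfun (F true).

Definition inC (K : fieldType) (p : pt K 3) : Prop := uc p = 0 /\ vc p = 0.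

Definition f0 (K : fieldType) (b : bool) (p : pt K 3) : K :=
  if ~~ b then tc p * vc p else vc p.
Definition f1 (K : fieldType) (b : bool) (p : pt K 3) : K :=
  if ~~ b then vc p else tc p * vc p.
Definition gfun (K : fieldType) (n i : nat) (b : bool) (p : pt K 3) : K :=
  if ~~ b then tc p ^+ (n.+2 - i) * uc p + tc p ^+ (n.+1 - i) * vc p ^+ n
  else tc p ^+ i * uc p.
Definition hfun (K : fieldType) (n : nat) (b : bool) (p : pt K 3) : K :=
  if ~~ b then uc p else tc p ^+ n.+2 * uc p - tc p ^+ n.+1 * vc p ^+ n.

(* Coordinates on A^(n+5): index 0 = X_0, 1 = X_1, 2+i = Y_i (0<=i<=n+1),
   n+4 = Z. *)
Definition psi (K : fieldType) (n : nat) (b : bool) (p : pt K 3) : pt K n.+4.+1 :=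
  fun j =>
    if val j == 0%N then f0 b p
    else if val j == 1%N then f1 b p
    else if (val j < n.+4)%N then gfun n (val j - 2) b p
    else hfun n b p.

Definition X0c (K : fieldType) (n : nat) (x : pt K n.+4.+1) : K := x (inord 0).
Definition X1c (K : fieldType) (n : nat) (x : pt K n.+4.+1) : K := x (inord 1).
Definition Yc (K : fieldType) (n : nat) (i : nat) (x : pt K n.+4.+1) : K := x (inord i.+2).
Definition Zc (K : fieldType) (n : nat) (x : pt K n.+4.+1) : K := x (inord n.+4).

(* Phat = V(I) in A^(n+5) (with reduced structure; its coordinate ring is the
   ring of polynomial functions restricted to this point set). *)
Definition inPhat (K : fieldType) (n : nat) (x : pt K n.+4.+1) : Prop :=
  (forall i j k l : nat, (i <= n.+1)%N -> (j <= n.+1)%N -> (k <= n.+1)%N ->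
     (l <= n.+1)%N -> (i + j = k + l)%N ->
     Yc i x * Yc j x - Yc k x * Yc l x = 0)
  /\ (forall i : nat, (i <= n)%N -> X0c x * Yc i.+1 x - X1c x * Yc i x = 0)
  /\ (forall i : nat, (i <= n)%N ->
        Zc x * Yc i x + X1c x ^+ n * Yc i.+1 x - Yc i.+1 x * Yc n.+1 x = 0)
  /\ Zc x * X0c x + X1c x ^+ n.+1 - X1c x * Yc n.+1 x = 0.

Arguments origin K k : clear implicits.
Arguments psi {K} n b p.
Arguments inPhat {K} n x.
Arguments trans {K} n p.
Arguments Qequiv {K} n a b.
Arguments Qcompat {K T} n F.
Arguments regularQ {K} n F.
Arguments gfun {K} n i b p.
Arguments hfun {K} n b p.

(* Main.v *)
Require Import Defs.
From HB Require Import structures.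
From mathcomp Require Import all_boot all_order all_algebra.
From Stdlib Require Import FunctionalExtensionality Classical.
From mathcomp Require Import ring lra zify.
From Stdlib Require Import Lia.
Set Implicit Arguments. Unset Strict Implicit. Unset Printing Implicit Defensive.
Import GRing.Theory.
Local Open Scope ring_scope.



Section Gen.
Variable K : fieldType.

Lemma polyfun_opp k (f : pt K k -> K) : polyfun f -> polyfun (fun x => - f x).
Proof.
move=> hf; apply: (polyfun_ext (polyfun_mul (polyfun_const _ (-1)) hf)) => x.
by rewrite mulN1r.
Qed.

Lemma polyfun_sub k (f g : pt K k -> K) : polyfun f -> polyfun g -> polyfun (fun x => f x - g x).
Proof. by move=> hf hg; apply: polyfun_add => //; apply: polyfun_opp. Qed.

Lemma polyfun_exp k (f : pt K k -> K) m : polyfun f -> polyfun (fun x => f x ^+ m).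
Proof.
move=> hf; elim: m => [|m ih].
  by apply: (polyfun_ext (polyfun_const _ 1)) => x; rewrite expr0.
by apply: (polyfun_ext (polyfun_mul hf ih)) => x; rewrite exprS.
Qed.

Lemma polyfun_sum k (T : Type) (s : seq T) (P : pred T) (F : T -> pt K k -> K) :
  (forall i, polyfun (F i)) -> polyfun (fun x => \sum_(i <- s | P i) F i x).
Proof.
move=> hF; elim: s => [|a s ih].
  by apply: (polyfun_ext (polyfun_const _ 0)) => x; rewrite big_nil.
case Pa: (P a).
  by apply: (polyfun_ext (polyfun_add (hF a) ih)) => x; rewrite big_cons Pa.
by apply: (polyfun_ext ih) => x; rewrite big_cons Pa.
Qed.

Definition T3 := (K * nat * nat * nat)%type.
Definition mon (p : pt K 3) (x : T3) : K :=
  x.1.1.1 * tc p ^+ x.1.1.2 * uc p ^+ x.1.2 * vc p ^+ x.2.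

Lemma pt3_coord (p : pt K 3) (i : 'I_3) :
  p i = if val i == 0%N then tc p else if val i == 1%N then uc p else vc p.
Proof.
rewrite /tc /uc /vc; case: i => [[|[|[|m]]] hm] //=.
- by congr p; apply: val_inj; rewrite /= inordK.
- by congr p; apply: val_inj; rewrite /= inordK.
- by congr p; apply: val_inj; rewrite /= inordK.
Qed.

Lemma rep3 (f : pt K 3 -> K) : polyfun f ->
  exists s : seq T3, forall p, f p = \sum_(x <- s) mon p x.
Proof.
elim=> {f}.
- move=> c; exists [:: (c, 0, 0, 0)%N] => p.
  by rewrite big_seq1 /mon /= !expr0 !mulr1.
- move=> i; exists [:: if val i == 0%N then ((1 : K), 1%N, 0%N, 0%N) else
                       if val i == 1%N then ((1 : K), 0%N, 1%N, 0%N) else ((1:K), 0%N, 0%N, 1%N)] => p.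
  rewrite big_seq1 pt3_coord /mon.
  by case: ifP => _; [|case: ifP => _]; rewrite /= !expr0 !expr1 !mulr1 mul1r.
- move=> f g _ [s1 h1] _ [s2 h2]; exists (s1 ++ s2) => p.
  by rewrite big_cat h1 h2.
- move=> f g _ [s1 h1] _ [s2 h2].
  pose mulT (z : T3 * T3) : T3 := (z.1.1.1.1 * z.2.1.1.1, (z.1.1.1.2 + z.2.1.1.2)%N,
     (z.1.1.2 + z.2.1.2)%N, (z.1.2 + z.2.2)%N).
  exists (map mulT [seq (x, y) | x <- s1, y <- s2]) => p.
  rewrite big_map big_allpairs h1 h2 mulr_suml; apply: eq_bigr => x _.
  rewrite mulr_sumr; apply: eq_bigr => y _.
  by rewrite /mon /mulT /= !exprD; ring.
- move=> f g _ [s h] e; exists s => p; by rewrite -e h.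
Qed.

(* infinitely many nonzero elements in char 0 *)
Hypothesis hK : [pchar K] =i pred0.

Lemma natS_inj (a b : nat) : (a.+1%:R : K) = b.+1%:R -> a = b.
Proof.
have h0 := (iffLR (pcharf0P K) hK).
wlog le_ab : a b / (a <= b)%N.
  move=> W e; case: (leqP a b) => h; first exact: W.
  by symmetry; apply: W; [apply: ltnW | ].
move=> e; move: (subnK le_ab) => eb.
have : ((b - a)%N%:R : K) == 0.
  have hb : (b.+1%:R : K) = (b - a)%N%:R + a.+1%:R by rewrite -natrD addnS eb.
  by apply/eqP; rewrite -(addrK (a.+1%:R : K) ((b - a)%N%:R)) -hb e subrr.
by rewrite h0 subn_eq0 => hba; apply/eqP; rewrite eqn_leq le_ab hba.
Qed.

Lemma univ0 (T : Type) (s : seq T) (c : T -> K) (e : T -> nat) :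
  (forall t : K, t != 0 -> \sum_(x <- s) c x * t ^+ e x = 0) ->
  forall m, \sum_(x <- s | e x == m) c x = 0.
Proof.
move=> H m.
pose q : {poly K} := \sum_(x <- s) c x *: 'X^(e x).
have qv t : q.[t] = \sum_(x <- s) c x * t ^+ e x.
  by rewrite /q horner_sum; apply: eq_bigr => x _; rewrite hornerZ hornerXn.
suff q0 : q = 0.
  have := coef_sumMXn s predT c e m; rewrite -/q q0 coef0 => H1.
  by rewrite [RHS]H1; apply: eq_bigl => x.
apply/eqP; apply/negPn/negP => qn0.
pose rs := [seq (i.+1%:R : K) | i <- iota 0 (size q)].
suff : (size rs < size q)%N by rewrite size_map size_iota ltnn.
apply: max_poly_roots qn0 _ _.
- apply/allP => r /mapP [i _ ->]; rewrite /root qv H //.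
  by rewrite (iffLR (pcharf0P K) hK).
- rewrite map_inj_uniq ?iota_uniq // => a b; exact: natS_inj.
Qed.

Lemma sum_key0 (T : Type) (U : eqType) (s : seq T) (f : T -> U) (c : T -> K) (g : U -> K) :
  (forall k, \sum_(x <- s | f x == k) c x = 0) -> \sum_(x <- s) c x * g (f x) = 0.
Proof.
move: {2}(size s) (leqnn (size s)) => N; elim: N s => [|N ih] s.
  by rewrite leqn0 => /nilP ->; rewrite big_nil.
case: s => [|x s'] hs H; first by rewrite big_nil.
set s := x :: s'.
rewrite (bigID (fun y => f y == f x)) /=.
have -> : \sum_(y <- s | f y == f x) c y * g (f y) = (\sum_(y <- s | f y == f x) c y) * g (f x).
  by rewrite mulr_suml; apply: eq_bigr => y /eqP ->.
rewrite H mul0r add0r -big_filter; apply: ih.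
  rewrite size_filter /= eqxx /= -ltnS; apply: leq_trans hs.
  by rewrite ltnS count_size.
move=> k; rewrite big_filter_cond; case: (eqVneq k (f x)) => [->|nk].
  by rewrite big_pred0 // => y; rewrite andNb.
rewrite -[RHS](H k); apply: eq_bigl => y; case: (eqVneq (f y) k) => [->|] //=.
  by rewrite nk.
by rewrite andbF.
Qed.

End Gen.



Section Geo.
Variable K : fieldType.
Variable n : nat.
Hypothesis hn : (0 < n)%N.

Lemma tc_mk3 (t u v : K) : tc (mk3 t u v) = t.
Proof. by rewrite /tc /mk3 /= inordK. Qed.
Lemma uc_mk3 (t u v : K) : uc (mk3 t u v) = u.
Proof. by rewrite /uc /mk3 /= inordK. Qed.
Lemma vc_mk3 (t u v : K) : vc (mk3 t u v) = v.
Proof. by rewrite /vc /mk3 /= inordK. Qed.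

Lemma tc_trans (p : pt K 3) : tc (trans n p) = (tc p)^-1.
Proof. by rewrite /trans tc_mk3. Qed.
Lemma uc_trans (p : pt K 3) : uc (trans n p) = tc p ^+ n.+1 * vc p ^+ n + tc p ^+ n.+2 * uc p.
Proof. by rewrite /trans uc_mk3. Qed.
Lemma vc_trans (p : pt K 3) : vc (trans n p) = tc p * vc p.
Proof. by rewrite /trans vc_mk3. Qed.

Lemma pt3_eq (p q : pt K 3) : tc p = tc q -> uc p = uc q -> vc p = vc q -> p = q.
Proof.
move=> e1 e2 e3; apply: functional_extensionality => i.
by rewrite (pt3_coord p) (pt3_coord q) e1 e2 e3.
Qed.

Lemma ptN_coord (x : pt K n.+4.+1) (j : 'I_n.+4.+1) :
  x j = if val j == 0%N then X0c x else if val j == 1%N then X1c x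
        else if (val j < n.+4)%N then Yc (val j - 2) x else Zc x.
Proof.
rewrite /X0c /X1c /Yc /Zc; case: j => [[|[|j']] hj] /=.
- by congr x; apply: val_inj; rewrite /= inordK.
- by congr x; apply: val_inj; rewrite /= inordK.
- rewrite subn2 /=; case: ifP => h; congr x; apply: val_inj; rewrite /= inordK //.
  by apply/eqP; rewrite eqn_leq -ltnS hj leqNgt h.
Qed.

Lemma ptN_eq (x y : pt K n.+4.+1) :
  X0c x = X0c y -> X1c x = X1c y -> (forall i, (i <= n.+1)%N -> Yc i x = Yc i y) ->
  Zc x = Zc y -> x = y.
Proof.
move=> e0 e1 eY eZ; apply: functional_extensionality => j.
rewrite (ptN_coord x) (ptN_coord y) e0 e1 eZ; case: ifP => // _; case: ifP => // _.
case: ifP => // h; rewrite eY //; rewrite leq_subLR; exact: h.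
Qed.

Lemma psiX0 b (p : pt K 3) : X0c (psi n b p) = f0 b p.
Proof. by rewrite /X0c /psi /= inordK. Qed.
Lemma psiX1 b (p : pt K 3) : X1c (psi n b p) = f1 b p.
Proof. by rewrite /X1c /psi /= inordK. Qed.
Lemma psiY b (p : pt K 3) i : (i <= n.+1)%N -> Yc i (psi n b p) = gfun n i b p.
Proof. move=> hi; rewrite /Yc /psi /= inordK; first by rewrite !ltnS hi subn2. by rewrite !ltnS (leq_trans hi). Qed.
Lemma psiZ b (p : pt K 3) : Zc (psi n b p) = hfun n b p.
Proof. by rewrite /Zc /psi /= inordK /= ?ltnn. Qed.

Lemma gfun0 i (p : pt K 3) : gfun n i false p =
  tc p ^+ (n.+2 - i) * uc p + tc p ^+ (n.+1 - i) * vc p ^+ n.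
Proof. by []. Qed.

Lemma compat_g i (p : pt K 3) : (i <= n.+1)%N -> tc p != 0 ->
  gfun n i false p = gfun n i true (trans n p).
Proof.
move=> hi ht; rewrite /gfun /= tc_trans uc_trans.
set k := (n.+1 - i)%N.
have e1 : (n.+2 - i)%N = k.+1 by rewrite /k subSn.
have e2 : tc p ^+ n.+1 = tc p ^+ k * tc p ^+ i by rewrite -exprD subnK.
have e3 : tc p ^+ n.+2 = tc p ^+ k * tc p * tc p ^+ i by rewrite exprS e2; ring.
rewrite e1 e2 e3 exprS exprVn; field.
by rewrite expf_neq0.
Qed.

Lemma compat_h (p : pt K 3) : tc p != 0 -> hfun n false p = hfun n true (trans n p).
Proof.
move=> ht; rewrite /hfun /= tc_trans uc_trans vc_trans.
rewrite !exprVn !exprS exprMn; field.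
by rewrite ht expf_neq0.
Qed.

Lemma compat_psi (p : pt K 3) j : tc p != 0 -> psi n false p j = psi n true (trans n p) j.
Proof.
move=> ht; rewrite /psi /f0 /f1 /=; case: ifP => _.
  by rewrite vc_trans.
case: ifP => _.
  by rewrite tc_trans vc_trans mulrA mulVf ?mul1r.
case: ifP => h; last exact: compat_h.
apply: compat_g => //; rewrite leq_subLR; exact: h.
Qed.

Lemma polyfun_tc : polyfun (@tc K). Proof. exact: polyfun_var. Qed.
Lemma polyfun_uc : polyfun (@uc K). Proof. exact: polyfun_var. Qed.
Lemma polyfun_vc : polyfun (@vc K). Proof. exact: polyfun_var. Qed.

Lemma polyfun_psi b (j : 'I_n.+4.+1) : polyfun (fun p : pt K 3 => psi n b p j).
Proof.
have ht := polyfun_tc; have hu := polyfun_uc; have hv := polyfun_vc.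
have pif (c : bool) (f g : pt K 3 -> K) : polyfun f -> polyfun g ->
    polyfun (fun x => if c then f x else g x).
  by case: c => hf hg; apply: polyfun_ext; [exact: hf| |exact: hg|].
rewrite /psi;
  case: b; rewrite /f0 /f1 /gfun /hfun /=;
  by repeat (apply: (pif) || apply: polyfun_sub || apply: polyfun_add || apply: polyfun_exp ||
    apply: polyfun_mul || done).
Qed.

Lemma regular_psi (j : 'I_n.+4.+1) : regularQ n (fun b (p : pt K 3) => psi n b p j).
Proof.
split; last by split; apply: polyfun_psi.
move=> p ht; exact: compat_psi.
Qed.

End Geo.



Section Geo3.
Variable K : fieldType.
Variable n : nat.
Hypothesis hn : (0 < n)%N.

Lemma gfalse_w i (p : pt K 3) : (i <= n.+1)%N ->
  gfun n i false p = tc p ^+ (n.+1 - i) * (tc p * uc p + vc p ^+ n).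
Proof. by move=> hi; rewrite /gfun /= subSn // exprS; ring. Qed.

Lemma gtrue i (p : pt K 3) : gfun n i true p = tc p ^+ i * uc p.
Proof. by []. Qed.

Lemma inPhat_psi b (p : pt K 3) : inPhat n (psi n b p).
Proof.
split; [|split; [|split]].
- move=> i j k l hi hj hk hl e; rewrite !psiY //; case: b.
  + rewrite !gtrue; have -> : tc p ^+ i * uc p * (tc p ^+ j * uc p) = tc p ^+ (i + j) * uc p * uc p by rewrite exprD; ring.
    by rewrite e exprD; ring.
  + rewrite !gfalse_w //.
    have H : forall a b : nat, tc p ^+ a * (tc p * uc p + vc p ^+ n) * (tc p ^+ b * (tc p * uc p + vc p ^+ n)) =
       tc p ^+ (a + b) * (tc p * uc p + vc p ^+ n) ^+ 2 by move=> a b; rewrite exprD; ring.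
    rewrite !H; have -> : (n.+1 - i + (n.+1 - j) = n.+1 - k + (n.+1 - l))%N by lia.
    by rewrite subrr.
- move=> i hi; rewrite psiX0 psiX1 !psiY ?(leq_trans hi) //; case: b.
  + by rewrite !gtrue /f0 /f1 /= exprS; ring.
  + rewrite !gfalse_w ?(leq_trans hi) // /f0 /f1 /=.
    have -> : (n.+1 - i = (n - i).+1)%N by rewrite subSn.
    rewrite subSS exprS; ring.
- move=> i hi; rewrite psiZ psiX1 !psiY ?(leq_trans hi) //; case: b.
  + rewrite !gtrue /hfun /f1 /= !exprS exprMn; ring.
  + rewrite !gfalse_w ?(leq_trans hi) // /hfun /f1 /= subnn.
    have -> : (n.+1 - i = (n - i).+1)%N by rewrite subSn.
    rewrite subSS exprS; ring.
- rewrite psiZ psiX0 psiX1 psiY //; case: b.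
  + by rewrite gtrue /hfun /f0 /f1 /= !exprS exprMn; ring.
  + rewrite gfalse_w // /hfun /f0 /f1 /= subnn exprS; ring.
Qed.

Lemma expr0n' (m : nat) : (0 < m)%N -> (0 : K) ^+ m = 0.
Proof. by case: m => // m _; rewrite exprS mul0r. Qed.

Lemma contract b (p : pt K 3) : inC p -> psi n b p = origin K n.+4.+1.
Proof.
case=> hu hv; apply: ptN_eq => [||i hi|].
- by rewrite psiX0 /f0 hv; case: b => /=; rewrite ?mulr0.
- by rewrite psiX1 /f1 hv; case: b => /=; rewrite ?mulr0.
- rewrite psiY //; case: b; rewrite ?gtrue ?gfalse_w // hu ?hv ?mulr0 //.
  by rewrite add0r expr0n' // mulr0.
- by rewrite psiZ /hfun hu hv; case: b => /=; rewrite ?mulr0 ?expr0n' // mulr0 subr0.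
Qed.

Lemma nonvanish b (p : pt K 3) : ~ inC p -> psi n b p <> origin K n.+4.+1.
Proof.
move=> hC he; apply: hC.
have h0 := congr1 (@X0c K n) he; have h1 := congr1 (@X1c K n) he.
have hY := congr1 (@Yc K n 0) he; have hZ := congr1 (@Zc K n) he.
rewrite psiX0 in h0; rewrite psiX1 in h1; rewrite psiY // in hY; rewrite psiZ in hZ.
clear he; rewrite /X0c /X1c /Yc /Zc /origin in h0 h1 hY hZ; rewrite /inC.
case: b h0 h1 hY hZ => /=.
- by rewrite /f0 /gfun /= => -> _; rewrite expr0 mul1r => ->.
- by rewrite /f1 /hfun /= => _ -> _ ->.
Qed.

End Geo3.



Section Geo4.
Variable K : fieldType.
Variable n : nat.
Hypothesis hn : (0 < n)%N.

Lemma down_lemma (Y : nat -> K) t m :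
  (forall i, (i < m)%N -> Y i = t * Y i.+1) ->
  forall i, (i <= m)%N -> Y i = t ^+ (m - i) * Y m.
Proof.
move=> H i hi; rewrite -{1}(subKn hi).
have : (m - i <= m)%N by rewrite leq_subr.
elim: (m - i)%N => [|k ih] hk; first by rewrite subn0 expr0 mul1r.
rewrite H; last by lia.
have -> : (m - k.+1).+1 = (m - k)%N by lia.
by rewrite ih ?exprS ?mulrA //; lia.
Qed.

Lemma up_lemma (Y : nat -> K) t m :
  (forall i, (i < m)%N -> Y i.+1 = t * Y i) ->
  forall i, (i <= m)%N -> Y i = t ^+ i * Y 0%N.
Proof.
move=> H; elim=> [|i ih] hi; first by rewrite expr0 mul1r.
by rewrite H // ih ?exprS ?mulrA //; apply: ltnW.
Qed.

Lemma L1 (x : pt K n.+4.+1) (p : pt K 3) : inPhat n x -> X1c x != 0 ->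
  tc p = X0c x / X1c x -> uc p = Zc x -> vc p = X1c x -> psi n false p = x.
Proof.
case=> R1 [R2 [R3 R4]] h1 et eu ev; apply: ptN_eq.
- by rewrite psiX0 /f0 /= et ev divfK.
- by rewrite psiX1 /f1 /= ev.
- move=> i hi; rewrite psiY // gfalse_w // et eu ev.
  have eY : Yc n.+1 x = X0c x / X1c x * Zc x + X1c x ^+ n.
    have e := subr0_eq R4; apply: (mulfI h1).
    have -> : X1c x * Yc n.+1 x = Zc x * X0c x + X1c x ^+ n.+1 by rewrite -e.
    by rewrite exprS; field.
  rewrite -eY; symmetry; apply: (down_lemma (Y := fun i => Yc i x)) => // j hj.
  have e := subr0_eq (R2 j hj); apply: (mulfI h1).
  by rewrite -e; field.
- by rewrite psiZ /hfun /= eu.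
Qed.

Lemma L2 (x : pt K n.+4.+1) (p : pt K 3) : inPhat n x -> X0c x != 0 ->
  tc p = X1c x / X0c x -> uc p = Yc 0 x -> vc p = X0c x -> psi n true p = x.
Proof.
case=> R1 [R2 [R3 R4]] h0 et eu ev.
have eY : forall i, (i <= n.+1)%N -> Yc i x = (X1c x / X0c x) ^+ i * Yc 0 x.
  apply: (up_lemma (Y := fun i => Yc i x)) => j hj.
  have e := subr0_eq (R2 j hj); apply: (mulfI h0).
  by rewrite e; field.
apply: ptN_eq.
- by rewrite psiX0 /f0 /= ev.
- by rewrite psiX1 /f1 /= et ev divfK.
- by move=> i hi; rewrite psiY // gtrue et eu (eY i hi).
- rewrite psiZ /hfun /= et eu ev; apply: (mulIf h0).
  have -> : Zc x * X0c x = X1c x * Yc n.+1 x - X1c x ^+ n.+1.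
    by rewrite -(subr0_eq R4) addrK.
  rewrite (eY n.+1) // !exprS !exprMn !exprVn; field.
  by rewrite h0 expf_neq0.
Qed.

Lemma L3 (x : pt K n.+4.+1) (p : pt K 3) : inPhat n x -> Yc 0 x != 0 ->
  tc p = Yc 1 x / Yc 0 x -> uc p = Yc 0 x -> vc p = X0c x -> psi n true p = x.
Proof.
case=> R1 [R2 [R3 R4]] h0 et eu ev.
have eY : forall i, (i <= n.+1)%N -> Yc i x = (Yc 1 x / Yc 0 x) ^+ i * Yc 0 x.
  apply: (up_lemma (Y := fun i => Yc i x)) => j hj.
  have e := subr0_eq (R1 j.+1 0 1 j hj (leq0n _) (ltn0Sn _) (ltnW hj) (addn0 _)).
  apply: (mulIf h0); rewrite e; field.
  done.
have eX1 : X1c x = Yc 1 x / Yc 0 x * X0c x.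
  have e := subr0_eq (R2 0 (leq0n _)); apply: (mulIf h0).
  by rewrite -e; field.
apply: ptN_eq.
- by rewrite psiX0 /f0 /= ev.
- by rewrite psiX1 /f1 /= et ev eX1.
- by move=> i hi; rewrite psiY // gtrue et eu (eY i hi).
- rewrite psiZ /hfun /= et eu ev; apply: (mulIf h0).
  have -> : Zc x * Yc 0 x = Yc 1 x * Yc n.+1 x - X1c x ^+ n * Yc 1 x.
    by rewrite -(subr0_eq (R3 0 (leq0n _))) addrK.
  rewrite eX1 (eY n.+1) // !exprS !exprMn !exprVn; field.
  by rewrite h0 expf_neq0.
Qed.

Lemma L4 (x : pt K n.+4.+1) (p : pt K 3) : inPhat n x -> Zc x != 0 ->
  tc p = (Yc n.+1 x - X1c x ^+ n) / Zc x -> uc p = Zc x -> vc p = X1c x ->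
  psi n false p = x.
Proof.
case=> R1 [R2 [R3 R4]] hZ et eu ev; apply: ptN_eq.
- rewrite psiX0 /f0 /= et ev; apply: (mulfI hZ).
  have -> : Zc x * X0c x = X1c x * Yc n.+1 x - X1c x ^+ n.+1.
    by rewrite -(subr0_eq R4) addrK.
  by rewrite exprS; field.
- by rewrite psiX1 /f1 /= ev.
- move=> i hi; rewrite psiY // gfalse_w // et eu ev.
  have -> : (Yc n.+1 x - X1c x ^+ n) / Zc x * Zc x + X1c x ^+ n = Yc n.+1 x.
    by rewrite divfK // subrK.
  symmetry; apply: (down_lemma (Y := fun i => Yc i x)) => // j hj.
  apply: (mulfI hZ).
  have -> : Zc x * Yc j x = Yc j.+1 x * Yc n.+1 x - X1c x ^+ n * Yc j.+1 x.
    by rewrite -(subr0_eq (R3 j hj)) addrK.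
  by field.
- by rewrite psiZ /hfun /= eu.
Qed.

End Geo4.



Section Geo5.
Variable K : fieldType.
Variable n : nat.
Hypothesis hn : (0 < n)%N.

Lemma nonzero_cases (x : pt K n.+4.+1) : inPhat n x -> x <> origin K n.+4.+1 ->
  X1c x != 0 \/ X0c x != 0 \/ Yc 0 x != 0 \/ Zc x != 0.
Proof.
move=> hx hne.
case: (eqVneq (X1c x) 0) => [h1|]; last by left.
case: (eqVneq (X0c x) 0) => [h0|]; last by right; left.
case: (eqVneq (Yc 0 x) 0) => [hY0|]; last by right; right; left.
case: (eqVneq (Zc x) 0) => [hZ|]; last by right; right; right.
exfalso; apply: hne; case: hx => R1 [R2 [R3 R4]].
have hYn : Yc n.+1 x = 0.
  have := R3 n (leqnn n); rewrite hZ h1 expr0n' // mul0r mul0r add0r sub0r.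
  by move/eqP; rewrite oppr_eq0 mulf_eq0 orbb => /eqP.
apply: ptN_eq => // k hk.
case: (leqP (k + k) n.+1) => hkk.
  have := R1 k k 0 (k + k)%N hk hk (leq0n _) hkk (add0n _).
  by rewrite hY0 mul0r subr0 => /eqP; rewrite mulf_eq0 orbb => /eqP.
have := R1 k k (k + k - n.+1)%N n.+1 hk hk ltac:(lia) (leqnn _) ltac:(lia).
by rewrite hYn mulr0 subr0 => /eqP; rewrite mulf_eq0 orbb => /eqP.
Qed.

Lemma glue01 (q r : pt K 3) : psi n false q = psi n true r -> ~ inC q ->
  tc q != 0 /\ r = trans n q.
Proof.
move=> e hC.
have E0 := congr1 (@X0c K n) e; rewrite !psiX0 /f0 /= in E0.
have E1 := congr1 (@X1c K n) e; rewrite !psiX1 /f1 /= in E1.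
have EY0 := congr1 (@Yc K n 0) e; rewrite !psiY // gfalse_w // gtrue expr0 mul1r subn0 in EY0.
have EY1 := congr1 (@Yc K n 1) e; rewrite !psiY // gfalse_w // gtrue expr1 subSS subn0 in EY1.
have EZ := congr1 (@Zc K n) e; rewrite !psiZ /hfun /= in EZ.
have htt : tc r * tc q = 1.
  case: (eqVneq (vc q) 0) => hv.
    have hu : uc q != 0 by apply/eqP => hu; apply: hC; split.
    have hv' : vc r = 0 by rewrite -E0 hv mulr0.
    have eu' : uc r = tc q ^+ n.+2 * uc q by rewrite -EY0 hv expr0n' // addr0 !exprS; ring.
    rewrite hv' expr0n' // mulr0 subr0 eu' mulrA -exprMn in EZ.
    have htq : tc q != 0.
      apply/eqP => ht; move: EZ; rewrite ht mulr0 expr0n' // mul0r.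
      by move/eqP; rewrite (negbTE hu).
    rewrite eu' hv expr0n' // addr0 in EY1.
    apply: (mulIf (x := tc q ^+ n.+1 * uc q)); first by rewrite mulf_neq0 // expf_neq0.
    rewrite mul1r; rewrite !exprS in EY1 *; rewrite [RHS](_ : _ = tc q ^+ n * (tc q * uc q)); [rewrite EY1; ring | ring].
  apply: (mulIf hv); rewrite mul1r {2}E1 -E0; ring.
have ht : tc q != 0 by apply/eqP => h; move: htt; rewrite h mulr0 => /eqP; rewrite eq_sym oner_eq0.
split => //; apply: pt3_eq.
- rewrite tc_trans; apply: (mulIf ht); rewrite htt mulVf //.
- rewrite uc_trans -EY0 !exprS; ring.
- by rewrite vc_trans E0.
Qed.

Lemma Qequiv_inj b (p : pt K 3) b' (p' : pt K 3) : psi n b' p' = psi n b p ->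
  ~ inC p -> ~ inC p' -> Qequiv n (b', p') (b, p).
Proof.
move=> e hC hC'.
case: b' e => [] ; case: b => e.
- left; congr pair.
  have E0 := congr1 (@X0c K n) e; rewrite !psiX0 /f0 /= in E0.
  have E1 := congr1 (@X1c K n) e; rewrite !psiX1 /f1 /= in E1.
  have EY0 := congr1 (@Yc K n 0) e; rewrite !psiY // !gtrue !expr0 !mul1r in EY0.
  have EY1 := congr1 (@Yc K n 1) e; rewrite !psiY // !gtrue !expr1 in EY1.
  apply: pt3_eq => //.
  case: (eqVneq (vc p) 0) => hv.
    have hu : uc p != 0 by apply/eqP => hu; apply: hC; split.
    by apply: (mulIf hu); rewrite -{1}EY0.
  by apply: (mulIf hv); rewrite -{1}E0.
- right; right; have [ht ->] := glue01 (esym e) hC; done.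
- right; left; have [ht ->] := glue01 e hC'; done.
- left; congr pair.
  have E0 := congr1 (@X0c K n) e; rewrite !psiX0 /f0 /= in E0.
  have E1 := congr1 (@X1c K n) e; rewrite !psiX1 /f1 /= in E1.
  have EY := congr1 (@Yc K n n.+1) e; rewrite !psiY // !gfalse_w // subnn !expr0 !mul1r in EY.
  have EZ := congr1 (@Zc K n) e; rewrite !psiZ /hfun /= in EZ.
  apply: pt3_eq => //.
  rewrite E1 EZ in E0 EY; move/addIr: EY => EY.
  case: (eqVneq (vc p) 0) => hv.
    have hu : uc p != 0 by apply/eqP => hu; apply: hC; split.
    by apply: (mulIf hu).
  by apply: (mulIf hv).
Qed.

Definition phi (x : pt K n.+4.+1) : Qpt K :=
  if X1c x != 0 then (false, mk3 (X0c x / X1c x) (Zc x) (X1c x))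
  else if X0c x != 0 then (true, mk3 (X1c x / X0c x) (Yc 0 x) (X0c x))
  else if Yc 0 x != 0 then (true, mk3 (Yc 1 x / Yc 0 x) (Yc 0 x) (X0c x))
  else (false, mk3 ((Yc n.+1 x - X1c x ^+ n) / Zc x) (Zc x) (X1c x)).

Lemma phi_ok (x : pt K n.+4.+1) : inPhat n x -> x <> origin K n.+4.+1 ->
  ~ inC (phi x).2 /\ psi n (phi x).1 (phi x).2 = x.
Proof.
move=> hx hne; have hc := nonzero_cases hx hne.
rewrite /phi /inC; case: ifPn => h1.
  split; first by rewrite vc_mk3 => -[_ /eqP]; rewrite (negbTE h1).
  by apply: L1; rewrite ?tc_mk3 ?uc_mk3 ?vc_mk3.
case: ifPn => h0.
  split; first by rewrite vc_mk3 => -[_ /eqP]; rewrite (negbTE h0).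
  by apply: L2; rewrite ?tc_mk3 ?uc_mk3 ?vc_mk3.
case: ifPn => hY.
  split; first by rewrite uc_mk3 => -[/eqP]; rewrite (negbTE hY).
  by apply: L3; rewrite ?tc_mk3 ?uc_mk3 ?vc_mk3.
have hZ : Zc x != 0 by move: hc; rewrite (negbTE h1) (negbTE h0) (negbTE hY); case=> [//|[//|[//|//]]].
split; first by rewrite uc_mk3 => -[/eqP]; rewrite (negbTE hZ).
by apply: L4; rewrite ?tc_mk3 ?uc_mk3 ?vc_mk3.
Qed.

Lemma phi_psi b (p : pt K 3) : ~ inC p -> Qequiv n (phi (psi n b p)) (b, p).
Proof.
move=> hC.
have [hC' e] := phi_ok (inPhat_psi hn b p) (@nonvanish K n b p hC).
have -> : phi (psi n b p) = ((phi (psi n b p)).1, (phi (psi n b p)).2) by case: (phi _).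
exact: Qequiv_inj.
Qed.

End Geo5.



Section Geo6.
Variable K : fieldType.
Variable n : nat.
Hypothesis hn : (0 < n)%N.

Definition A3 (a b d : pt K n.+4.+1 -> K) (i : 'I_3) (y : pt K n.+4.+1) : K :=
  if val i == 0%N then a y else if val i == 1%N then b y else d y.

Lemma A3t a b d G y : tc (fun i => A3 a b d i y / G y) = a y / G y.
Proof. by rewrite /tc /A3 /= inordK. Qed.
Lemma A3u a b d G y : uc (fun i => A3 a b d i y / G y) = b y / G y.
Proof. by rewrite /uc /A3 /= inordK. Qed.
Lemma A3v a b d G y : vc (fun i => A3 a b d i y / G y) = d y / G y.
Proof. by rewrite /vc /A3 /= inordK. Qed.

Lemma local_gen (x : pt K n.+4.+1) c (G a b d : pt K n.+4.+1 -> K) :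
  polyfun G -> polyfun a -> polyfun b -> polyfun d -> G x != 0 ->
  (forall y, inPhat n y -> G y != 0 ->
     let q := (fun i => A3 a b d i y / G y) in ~ inC q /\ psi n c q = y) ->
  exists (c : bool) (G : pt K n.+4.+1 -> K) (A : 'I_3 -> pt K n.+4.+1 -> K),
    polyfun G /\ (forall i, polyfun (A i)) /\ G x != 0 /\
    forall y, inPhat n y -> y <> origin K n.+4.+1 -> G y != 0 ->
      Qequiv n (phi y) (c, fun i => A i y / G y).
Proof.
move=> pG pa pb pd Gx H; exists c, G, (A3 a b d); split => //; split.
  move=> i; rewrite /A3; case: (val i == 0%N); last case: (val i == 1%N).
  - by apply: (polyfun_ext pa).
  - by apply: (polyfun_ext pb).
  - by apply: (polyfun_ext pd).
split => // y hy _ Gy; have [hC e] := H y hy Gy.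
have := phi_psi hn c hC; by rewrite e.
Qed.

Lemma polyfun_X0 : polyfun (@X0c K n). Proof. exact: polyfun_var. Qed.
Lemma polyfun_X1 : polyfun (@X1c K n). Proof. exact: polyfun_var. Qed.
Lemma polyfun_Y i : polyfun (@Yc K n i). Proof. exact: polyfun_var. Qed.
Lemma polyfun_Z : polyfun (@Zc K n). Proof. exact: polyfun_var. Qed.

Lemma local (x : pt K n.+4.+1) : inPhat n x -> x <> origin K n.+4.+1 ->
  exists (c : bool) (G : pt K n.+4.+1 -> K) (A : 'I_3 -> pt K n.+4.+1 -> K),
    polyfun G /\ (forall i, polyfun (A i)) /\ G x != 0 /\
    forall y, inPhat n y -> y <> origin K n.+4.+1 -> G y != 0 ->
      Qequiv n (phi y) (c, fun i => A i y / G y).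
Proof.
move=> hx hne.
have p0 := polyfun_X0; have p1 := polyfun_X1; have pY := polyfun_Y; have pZ := polyfun_Z.
case: (nonzero_cases hn hx hne) => [h|[h|[h|h]]].
- apply: (@local_gen x false (@X1c K n) (@X0c K n) (fun y => Zc y * X1c y)
     (fun y => X1c y * X1c y)) => //; try by apply: polyfun_mul.
  move=> y hy Gy q; have ev : vc q = X1c y by rewrite /q A3v mulfK.
  split; first by rewrite /inC ev => -[_ /eqP]; rewrite (negbTE Gy).
  by apply: L1; rewrite // /q ?A3t ?A3u ?A3v ?mulfK.
- apply: (@local_gen x true (@X0c K n) (@X1c K n) (fun y => Yc 0 y * X0c y)
     (fun y => X0c y * X0c y)) => //; try by apply: polyfun_mul.
  move=> y hy Gy q; have ev : vc q = X0c y by rewrite /q A3v mulfK.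
  split; first by rewrite /inC ev => -[_ /eqP]; rewrite (negbTE Gy).
  by apply: L2; rewrite // /q ?A3t ?A3u ?A3v ?mulfK.
- apply: (@local_gen x true (@Yc K n 0) (@Yc K n 1) (fun y => Yc 0 y * Yc 0 y)
     (fun y => X0c y * Yc 0 y)) => //; try by apply: polyfun_mul.
  move=> y hy Gy q; have eu : uc q = Yc 0 y by rewrite /q A3u mulfK.
  split; first by rewrite /inC eu => -[/eqP]; rewrite (negbTE Gy).
  by apply: L3; rewrite // /q ?A3t ?A3u ?A3v ?mulfK.
- apply: (@local_gen x false (@Zc K n) (fun y => Yc n.+1 y - X1c y ^+ n)
     (fun y => Zc y * Zc y) (fun y => X1c y * Zc y)) => //;
     try by (apply: polyfun_mul || apply: polyfun_sub); try apply: polyfun_exp.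
  move=> y hy Gy q; have eu : uc q = Zc y by rewrite /q A3u mulfK.
  split; first by rewrite /inC eu => -[/eqP]; rewrite (negbTE Gy).
  by apply: L4; rewrite // /q ?A3t ?A3u ?A3v ?mulfK.
Qed.

Lemma pull_inj (P : pt K n.+4.+1 -> K) : (forall b (p : pt K 3), P (psi n b p) = 0) ->
  forall x, inPhat n x -> P x = 0.
Proof.
move=> H x hx; case: (classic (x = origin K n.+4.+1)) => [->|hne].
  rewrite -(contract hn false (p := mk3 0 0 0)); first exact: H.
  by rewrite /inC uc_mk3 vc_mk3.
have [_ <-] := phi_ok hn hx hne; exact: H.
Qed.

End Geo6.



Section Surj.
Variable K : fieldType.
Hypothesis hK : [pchar K] =i pred0.
Variable n : nat.
Hypothesis hn : (0 < n)%N.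

Fixpoint monoU (a b : nat) (x : pt K n.+4.+1) : K :=
  match b with 0%N => 1 | b'.+1 => Yc (minn a n.+1) x * monoU (a - n.+1) b' x end.

Definition Mo (a b c : nat) (x : pt K n.+4.+1) : K :=
  monoU a b x * X1c x ^+ (a - n.+1 * b) * X0c x ^+ (c - (a - n.+1 * b)).

Lemma monoU_psi a b (p : pt K 3) :
  monoU a b (psi n true p) = tc p ^+ (minn a (n.+1 * b)) * uc p ^+ b.
Proof.
elim: b a => [|b ih] a /=; first by rewrite muln0 minn0 !expr0 mulr1.
rewrite ih psiY ?geq_minr // gtrue.
have -> : minn a (n.+1 * b.+1) = (minn a n.+1 + minn (a - n.+1) (n.+1 * b))%N by lia.
by rewrite exprD exprS; ring.
Qed.

Lemma Mo_psi a b c (p : pt K 3) : (a <= n.+1 * b + c)%N ->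
  Mo a b c (psi n true p) = tc p ^+ a * uc p ^+ b * vc p ^+ c.
Proof.
move=> h; rewrite /Mo monoU_psi psiX1 psiX0 /f0 /f1 /= exprMn.
have -> : tc p ^+ a = tc p ^+ (minn a (n.+1 * b)) * tc p ^+ (a - n.+1 * b).
  by rewrite -exprD; congr (_ ^+ _); lia.
have -> : vc p ^+ c = vc p ^+ (a - n.+1 * b) * vc p ^+ (c - (a - n.+1 * b)).
  by rewrite -exprD; congr (_ ^+ _); lia.
ring.
Qed.

Lemma polyfun_monoU a b : polyfun (monoU a b).
Proof.
elim: b a => [|b ih] a /=; first exact: polyfun_const.
apply: polyfun_mul; [exact: polyfun_Y | exact: ih].
Qed.

Lemma polyfun_Mo a b c : polyfun (Mo a b c).
Proof.
apply: polyfun_mul; [apply: polyfun_mul|]; rewrite ?/Mo.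
- exact: polyfun_monoU.
- apply: polyfun_exp; exact: polyfun_X1.
- apply: polyfun_exp; exact: polyfun_X0.
Qed.

Lemma polyfun_comp b (P : pt K n.+4.+1 -> K) : polyfun P ->
  polyfun (fun p : pt K 3 => P (psi n b p)).
Proof.
elim=> {P}.
- by move=> c; apply: polyfun_const.
- by move=> j; apply: polyfun_psi.
- by move=> f g _ hf _ hg; apply: polyfun_add.
- by move=> f g _ hf _ hg; apply: polyfun_mul.
- by move=> f g _ hf e; apply: (polyfun_ext hf) => p; rewrite e.
Qed.

Lemma density (phi : pt K 3 -> K) : polyfun phi ->
  (forall q, tc q != 0 -> phi q = 0) -> forall q, phi q = 0.
Proof.
move=> /rep3 [s hs] H q.
pose c (x : T3 K) := x.1.1.1 * uc q ^+ x.1.2 * vc q ^+ x.2.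
have key : forall t : K, t != 0 -> \sum_(x <- s) c x * t ^+ x.1.1.2 = 0.
  move=> t ht; rewrite -[RHS](H (mk3 t (uc q) (vc q))); last by rewrite tc_mk3.
  rewrite hs; apply: eq_bigr => x _.
  by rewrite /mon /c tc_mk3 uc_mk3 vc_mk3; ring.
have := univ0 hK key => hm.
rewrite hs -[RHS](@sum_key0 K (T3 K) nat s (fun x : T3 K => x.1.1.2) c (fun m => tc q ^+ m) hm).
by apply: eq_bigr => x _; rewrite /mon /c; ring.
Qed.

End Surj.



Section Core.
Variable K : fieldType.
Hypothesis hK : [pchar K] =i pred0.
Variable n : nat.

Definition bad (y : T3 K) := (n.+1 * y.1.2 + y.2 < y.1.1.2)%N.
Definition trip (x : T3 K) : nat * nat * nat := (x.1.1.2, x.1.2, x.2).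

Lemma core (s0 s1 : seq (T3 K)) :
  (forall t r v : K, t != 0 -> \sum_(x <- s0) mon (mk3 t (r / t) v) x =
     \sum_(y <- s1 | bad y) mon (trans n (mk3 t (r / t) v)) y) ->
  forall a b c, (b <= a)%N -> \sum_(x <- s0 | trip x == (a, b, c)) x.1.1.1 = 0.
Proof.
move=> H a b c hba.
pose Nb := (\max_(x <- s0) x.1.2)%N; pose Na := (\max_(y <- s1) y.1.1.2)%N.
pose N := (Nb + Na)%N.
have hNb : forall x, x \in s0 -> (x.1.2 <= Nb)%N.
  by move=> x hx; apply: (@leq_bigmax_seq _ s0 xpredT).
have hNa : forall y, y \in s1 -> (y.1.1.2 <= N)%N.
  move=> y hy; apply: (leq_trans _ (leq_addl Nb Na)).
  by apply: (@leq_bigmax_seq _ s1 xpredT).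
case: (leqP b Nb) => hbN; last first.
  rewrite big_seq_cond big_pred0 // => x; apply/negP => /andP [hx].
  rewrite /trip !xpair_eqE => /andP [/andP [_ /eqP hb] _].
  by move: (hNb x hx); rewrite hb => h; move: (leq_trans hbN h); rewrite ltnn.
pose m := (N - b + a)%N.
pose zs (r v : K) :=
  [seq (x.1.1.1 * r ^+ x.1.2 * v ^+ x.2, (N - x.1.2 + x.1.1.2)%N) | x <- s0] ++
  [seq (- (y.1.1.1 * (r + v ^+ n) ^+ y.1.2 * v ^+ y.2),
        (N - y.1.1.2 + (n.+1 * y.1.2 + y.2))%N) | y <- [seq y <- s1 | bad y]].
have C1 : forall r v t : K, t != 0 -> \sum_(z <- zs r v) z.1 * t ^+ z.2 = 0.
  move=> r v t ht; rewrite big_cat !big_map big_filter /=.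
  have E1 : \sum_(x <- s0) x.1.1.1 * r ^+ x.1.2 * v ^+ x.2 * t ^+ (N - x.1.2 + x.1.1.2) =
      t ^+ N * \sum_(x <- s0) mon (mk3 t (r / t) v) x.
    rewrite mulr_sumr big_seq [RHS]big_seq; apply: eq_bigr => x hx.
    have hxN : (x.1.2 <= N)%N by apply: leq_trans (hNb x hx) (leq_addr _ _).
    rewrite /mon tc_mk3 uc_mk3 vc_mk3.
    have -> : t ^+ N = t ^+ (N - x.1.2) * t ^+ x.1.2 by rewrite -exprD subnK.
    rewrite exprD expr_div_n; field.
    by rewrite expf_neq0.
  have E2 : \sum_(y <- s1 | bad y) - (y.1.1.1 * (r + v ^+ n) ^+ y.1.2 * v ^+ y.2) *
        t ^+ (N - y.1.1.2 + (n.+1 * y.1.2 + y.2)) =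
      - (t ^+ N * \sum_(y <- s1 | bad y) mon (trans n (mk3 t (r / t) v)) y).
    rewrite mulr_sumr -sumrN big_seq_cond [RHS]big_seq_cond; apply: eq_bigr => y /andP [hy _].
    have hyN := hNa y hy.
    rewrite /mon tc_trans uc_trans vc_trans tc_mk3 uc_mk3 vc_mk3.
    have -> : t ^+ n.+1 * v ^+ n + t ^+ n.+2 * (r / t) = t ^+ n.+1 * (r + v ^+ n).
      by rewrite !exprS; field.
    have -> : t ^+ N = t ^+ (N - y.1.1.2) * t ^+ y.1.1.2 by rewrite -exprD subnK.
    rewrite exprMn -exprM; set P := (n.+1 * _)%N; rewrite !exprD exprMn exprVn; field.
    by rewrite expf_neq0.
  by rewrite E1 E2 H // subrr.
have C3 : forall r v : K, \sum_(x <- s0 | (N - x.1.2 + x.1.1.2 == m)%N)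
     x.1.1.1 * r ^+ x.1.2 * v ^+ x.2 = 0.
  move=> r v; have := univ0 hK (C1 r v) m; rewrite big_cat !big_map /=.
  rewrite (_ : \sum_(j <- [seq y <- s1 | bad y] | _) _ = 0) ?addr0 //.
  rewrite big_seq_cond big_pred0 // => y; apply/negP => /andP [hy /eqP he].
  move: hy; rewrite mem_filter => /andP [hb hy1]; have hyN := hNa y hy1.
  have h1 : (N - y.1.1.2 + (n.+1 * y.1.2 + y.2) < N)%N.
    by rewrite -{2}(subnK hyN) ltn_add2l.
  have hbN' : (b <= N)%N by apply: leq_trans hbN (leq_addr _ _).
  have h2 : (N <= N - b + a)%N by rewrite -{1}(subnK hbN') leq_add2l.
  by move: (leq_trans h1 h2); rewrite he /m ltnn.
pose s := [seq x <- s0 | (N - x.1.2 + x.1.1.2 == m)%N].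
have C4 : forall v : K, \sum_(x <- s | x.1.2 == b) x.1.1.1 * v ^+ x.2 = 0.
  move=> v; apply: (univ0 hK (c := fun x => x.1.1.1 * v ^+ x.2) (e := fun x => x.1.2)) => r hr.
  rewrite -[RHS](C3 r v) /s big_filter; apply: eq_bigr => x _; ring.
pose s' := [seq x <- s | x.1.2 == b].
have C5 : \sum_(x <- s' | x.2 == c) x.1.1.1 = 0.
  apply: (univ0 hK (c := fun x => x.1.1.1) (e := fun x => x.2)) => v hv.
  by rewrite -[RHS](C4 v) /s' big_filter.
rewrite -[RHS]C5 /s' /s !big_filter_cond big_seq_cond [RHS]big_seq_cond.
apply: eq_bigl => x; case hx: (x \in s0) => //=.
rewrite /trip !xpair_eqE; case: (eqVneq x.1.2 b) => [eb|ne]; last by rewrite !andbF.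
by rewrite /m eb eqn_add2l andbA.
Qed.

End Core.



Section Surj2.
Variable K : fieldType.
Hypothesis hK : [pchar K] =i pred0.
Variable n : nat.
Hypothesis hn : (0 < n)%N.

Lemma psi_compat_fun (p : pt K 3) : tc p != 0 -> psi n false p = psi n true (trans n p).
Proof. by move=> ht; apply: functional_extensionality => j; apply: compat_psi. Qed.

Lemma surj (F : bool -> pt K 3 -> K) : regularQ n F ->
  exists P : pt K n.+4.+1 -> K, polyfun P /\
    forall (b : bool) (p : pt K 3), F b p = P (psi n b p).
Proof.
case=> hcomp [pf0 pf1].
have [s1 h1] := rep3 pf1.
pose Pg (x : pt K n.+4.+1) :=
  \sum_(y <- s1 | ~~ bad n y) y.1.1.1 * Mo y.1.1.2 y.1.2 y.2 x.
have pPg : polyfun Pg.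
  apply: polyfun_sum => y; apply: polyfun_mul; [exact: polyfun_const | exact: polyfun_Mo].
have Pg_true (q : pt K 3) : Pg (psi n true q) = \sum_(y <- s1 | ~~ bad n y) mon q y.
  apply: eq_bigr => y hy; have hy' : (y.1.1.2 <= n.+1 * y.1.2 + y.2)%N.
    by move: hy; rewrite /bad -leqNgt.
  by rewrite Mo_psi // /mon !mulrA.
pose G1 (q : pt K 3) := \sum_(y <- s1 | bad n y) mon q y.
have hA (q : pt K 3) : F true q = Pg (psi n true q) + G1 q.
  by rewrite h1 (bigID (bad n)) /= addrC Pg_true.
pose G0 (p : pt K 3) := F false p - Pg (psi n false p).
have pG0 : polyfun G0 by apply: polyfun_sub => //; apply: polyfun_comp.
have [s0 h0] := rep3 pG0.
have hB p : tc p != 0 -> G0 p = G1 (trans n p).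
  move=> ht; rewrite /G0 hcomp // psi_compat_fun // hA; ring.
have hC := core hK (s0 := s0) (s1 := s1) (n := n).
have {hC} hC : forall a b c, (b <= a)%N -> \sum_(x <- s0 | trip x == (a, b, c)) x.1.1.1 = 0.
  apply: hC => t r v ht; by rewrite -h0 hB // tc_mk3.
pose Pb (x : pt K n.+4.+1) := \sum_(y <- s0 | (y.1.1.2 < y.1.2)%N)
  y.1.1.1 * (Yc n.+1 x - X1c x ^+ n) ^+ y.1.1.2 * Zc x ^+ (y.1.2 - y.1.1.2) * X1c x ^+ y.2.
have pPb : polyfun Pb.
  apply: polyfun_sum => y.
  apply: polyfun_mul; [apply: polyfun_mul; [apply: polyfun_mul|]|].
  - exact: polyfun_const.
  - apply: polyfun_exp; apply: polyfun_sub; first exact: polyfun_Y.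
    apply: polyfun_exp; exact: polyfun_X1.
  - apply: polyfun_exp; exact: polyfun_Z.
  - apply: polyfun_exp; exact: polyfun_X1.
have hD p : G0 p = Pb (psi n false p).
  rewrite h0 (bigID (fun y : T3 K => (y.1.1.2 < y.1.2)%N)) /=.
  have -> : \sum_(x <- s0 | ~~ (x.1.1.2 < x.1.2)%N) mon p x = 0.
    rewrite big_mkcond /=.
    pose g (k : nat * nat * nat) := tc p ^+ k.1.1 * uc p ^+ k.1.2 * vc p ^+ k.2.
    rewrite -[RHS](@sum_key0 K (T3 K) _ s0 (@trip K)
      (fun x => if ~~ (x.1.1.2 < x.1.2)%N then x.1.1.1 else 0) g).
      apply: eq_bigr => x _; rewrite /mon /g /trip /=.
      by case: ifP => _; rewrite ?mul0r //; ring.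
    case=> [[a b] c]; case: (leqP b a) => hab.
      rewrite -[RHS](hC a b c hab); apply: eq_bigr => x /eqP e.
      by move: e; rewrite /trip => -[-> -> _]; rewrite -leqNgt hab.
    apply: big1 => x /eqP e; move: e; rewrite /trip => -[ea eb _].
    by rewrite ea eb hab.
  rewrite addr0; apply: eq_bigr => y hy.
  rewrite psiY // gfalse_w // psiZ psiX1 /hfun /f1 /= subnn expr0 mul1r addrK.
  have e : uc p ^+ y.1.2 = uc p ^+ y.1.1.2 * uc p ^+ (y.1.2 - y.1.1.2).
    by rewrite -exprD subnKC // ltnW.
  rewrite /mon exprMn e; ring.
exists (fun x => Pg x + Pb x); split; first exact: polyfun_add.
case.
- move=> q; rewrite hA; congr (_ + _).
  pose phi q := G1 q - Pb (psi n true q).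
  suff : phi q = 0 by move/subr0_eq.
  apply: (density hK (phi := phi)) q.
    apply: polyfun_sub; last exact: polyfun_comp.
    apply: (polyfun_ext (polyfun_sub pf1 (polyfun_comp true pPg))) => x.
    by rewrite hA; ring.
  move=> {}q ht.
  pose p := mk3 (tc q)^-1 (tc q ^+ n.+2 * uc q - tc q ^+ n.+1 * vc q ^+ n) (tc q * vc q).
  have hp : tc p != 0 by rewrite tc_mk3 invr_neq0.
  have eq : trans n p = q.
    apply: pt3_eq; rewrite ?tc_trans ?uc_trans ?vc_trans tc_mk3 ?uc_mk3 ?vc_mk3.
    - by rewrite invrK.
    - rewrite !exprVn !exprMn !exprS; field.
      by rewrite ht expf_neq0.
    - by rewrite mulrA mulVf ?mul1r.
  by rewrite /phi -eq -hB // hD psi_compat_fun // subrr.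
- move=> p; rewrite -hD /G0; ring.
Qed.

End Surj2.



Theorem mainTheorem17 (K : closedFieldType) (hK : [pchar K] =i pred0)
    (n : nat) (hn : (1 <= n)%N) :
  (* psi = (f0,f1,g_0..g_{n+1},h) is a morphism Q -> Phat *)
  (forall j : 'I_n.+4.+1, regularQ n (fun (b : bool) (p : pt K 3) => psi n b p j)) /\
  (forall (b : bool) (p : pt K 3), inPhat n (psi n b p)) /\
  (* psi contracts C to 0 *)
  (forall (b : bool) (p : pt K 3), inC p -> psi n b p = origin K n.+4.+1) /\
  (* psi restricts to an isomorphism Q \ C -> Phat \ {0} *)
  (forall (b : bool) (p : pt K 3), ~ inC p -> psi n b p <> origin K n.+4.+1) /\
  (exists phi : pt K n.+4.+1 -> Qpt K,
     (forall x, inPhat n x -> x <> origin K n.+4.+1 ->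
        ~ inC (phi x).2 /\ psi n (phi x).1 (phi x).2 = x) /\
     (forall (b : bool) (p : pt K 3), ~ inC p -> Qequiv n (phi (psi n b p)) (b, p)) /\
     (forall x, inPhat n x -> x <> origin K n.+4.+1 ->
        exists (c : bool) (G : pt K n.+4.+1 -> K) (A : 'I_3 -> pt K n.+4.+1 -> K),
          polyfun G /\ (forall i, polyfun (A i)) /\ G x != 0 /\
          forall y, inPhat n y -> y <> origin K n.+4.+1 -> G y != 0 ->
            Qequiv n (phi y) (c, fun i => A i y / G y))) /\
  (* O(Q) = K[f0, f1, g_0, ..., g_{n+1}, h], i.e. psi^* is surjective *)
  (forall F : bool -> pt K 3 -> K, regularQ n F ->
     exists P : pt K n.+4.+1 -> K, polyfun P /\
       forall (b : bool) (p : pt K 3), F b p = P (psi n b p)) /\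
  (* psi^* : O(Phat) -> O(Q) is injective *)
  (forall P : pt K n.+4.+1 -> K, polyfun P ->
     (forall (b : bool) (p : pt K 3), P (psi n b p) = 0) ->
     forall x, inPhat n x -> P x = 0).
Proof.
split; first by move=> j; apply: regular_psi.
split; first by move=> b p; apply: inPhat_psi.
split; first by move=> b p hp; apply: contract.
split; first by move=> b p hp; apply: nonvanish.
split.
  exists (@phi K n); split; first by move=> x hx hne; apply: phi_ok.
  split; first by move=> b p hp; apply: phi_psi.
  by move=> x hx hne; apply: local.
split; first by move=> F hF; apply: surj.
by move=> P _ H x hx; apply: pull_inj H x hx.
Qed.
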